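(* Let $k\ge3$ and integers $1\le j_1$, $i_m\le j_m$ ($2\le m\le k$) with $j_m<i_{m+1}-1$ for $1\le m<k$; let $A=[1;j_1]\cup[i_2;j_2]\cup\dots\cup[i_k;j_k]$ and $n\ge j_k$. Let $B$ satisfy $[i_2;j_2]\cup\dots\cup[i_{k-1};j_{k-1}]\subseteq B\subseteq A$. Then $\Lambda_A\Lambda_B=\Lambda_B\Lambda_A$ in $U_q(\mathfrak{sl}_2)^{\otimes n}$.
   Context: Let $\mathbb{K}$ be a field and $q\in\mathbb{K}$ not a root of unity. $U_q(\mathfrak{sl}_2)$ is the associative $\mathbb{K}$-algebra with generators $E,F,K,K^{-1}$ and relations $KK^{-1}=K^{-1}K=1$, $KE=q^2EK$, $KF=q^{-2}FK$, $EF-FE=\frac{K-K^{-1}}{q-q^{-1}}$, with Casimir element $\Lambda=(q-q^{-1})^2EF+q^{-1}K+qK^{-1}$ and coproduct $\Delta(E)=E\otimes1+K\otimes E$, $\Delta(F)=F\otimes K^{-1}+1\otimes F$, $\Delta(K^{\pm1})=K^{\pm1}\otimes K^{\pm1}$. $\mathcal{I}_R$ is the subalgebra generated by $EK^{-1},F,K^{-1},\Lambda$, with algebra morphism $\tau_R:\mathcal{I}_R\to U_q(\mathfrak{sl}_2)\otimes\mathcal{I}_R$: $\tau_R(EK^{-1})=K^{-1}\otimes EK^{-1}$, $\tau_R(F)=K\otimes F-q^{-3}(q-q^{-1})^2F^2K\otimes EK^{-1}+q^{-1}(q+q^{-1})FK\otimes K^{-1}-q^{-1}FK\otimes\Lambda$,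 $\tau_R(K^{-1})=1\otimes K^{-1}-q^{-1}(q-q^{-1})^2F\otimes EK^{-1}$, $\tau_R(\Lambda)=1\otimes\Lambda$. $[i;j]=\{i,\dots,j\}$; $1^{\otimes\ell}\otimes\varphi\otimes1^{\otimes m}$ applies $\varphi$ to tensor position $\ell+1$. For $A=\{a_1<\dots<a_m\}\subseteq[1;n]$, $\Lambda_A=1^{\otimes(a_1-1)}\otimes(\mu_m\circ\cdots\circ\mu_2)(\Lambda)\otimes1^{\otimes(n-a_m)}$ with $\mu_i=(1^{\otimes(a_i-a_1-1)}\otimes\tau_R)\circ\cdots\circ(1^{\otimes(a_{i-1}-a_1+1)}\otimes\tau_R)\circ(1^{\otimes(a_{i-1}-a_1)}\otimes\Delta)$ (no $\tau_R$ factors when $a_i=a_{i-1}+1$). *)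

(* Defs.v *)
From HB Require Import structures.
From mathcomp Require Import all_boot all_order all_algebra.
Set Implicit Arguments. Unset Strict Implicit. Unset Printing Implicit Defensive.
Import GRing.Theory.
Local Open Scope ring_scope.

(* Tensor positions are numbered 1..n.  An element of
   U^{\otimes (p-1)} (x) I_R  (last factor at position p lying in the
   left coideal subalgebra I_R) is represented by a formal noncommutative
   expression whose atoms are U-generators (E,F,K,K^{-1}) at positions < p
   and I_R-generators (EK^{-1}, F, K^{-1}, Lambda) at position p. *)

Inductive ugen := gE | gF | gK | gKi.
Inductive igen := iX (* = E K^{-1} *) | iF | iKi | iL .

Inductive term (K : Type) :=
  | tC of K
  | tAdd of term K & term K
  | tMul of term K & term K
  | tU of nat & ugen
  | tI of nat & igen.

Arguments tU {K}. Arguments tI {K}.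

Fixpoint tsubst (K : Type) (p : nat) (phi : igen -> term K) (t : term K) : term K :=
  match t with
  | tAdd a b => tAdd (tsubst p phi a) (tsubst p phi b)
  | tMul a b => tMul (tsubst p phi a) (tsubst p phi b)
  | tI p' g => if p' == p then phi g else t
  | _ => t
  end.

Definition tSc (K : Type) (c : K) (t : term K) := tMul (tC c) t.

(* Coproduct Delta restricted to I_R, with values in U (x) I_R,
   first factor at position p, second at position p+1. *)
Definition delta_img (K : fieldType) (q : K) (p : nat) (g : igen) : term K :=
  let c := (q - q^-1) ^+ 2 in
  match g with
  | iX =>
      tAdd (tMul (tMul (tU p gE) (tU p gKi)) (tI p.+1 iKi)) (tI p.+1 iX)
  | iF =>
      tAdd (tMul (tU p gF) (tI p.+1 iKi)) (tI p.+1 iF)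
  | iKi =>
      tMul (tU p gKi) (tI p.+1 iKi)
  | iL =>
      tAdd (tSc c (tMul (tMul (tU p gE) (tU p gF)) (tI p.+1 iKi)))
     (tAdd (tSc c (tMul (tU p gE) (tI p.+1 iF)))
     (tAdd (tSc c (tMul (tMul (tU p gK) (tU p gF)) (tI p.+1 iX)))
     (tAdd (tMul (tU p gK) (tI p.+1 iL))
     (tAdd (tSc (- q) (tMul (tU p gK) (tI p.+1 iKi)))
           (tSc q (tMul (tU p gKi) (tI p.+1 iKi)))))))
  end.

(* tau_R : I_R -> U (x) I_R, first factor at position p, second at p+1. *)
Definition tau_img (K : fieldType) (q : K) (p : nat) (g : igen) : term K :=
  let c := (q - q^-1) ^+ 2 in
  match g with
  | iX => tMul (tU p gKi) (tI p.+1 iX)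
  | iF =>
      tAdd (tMul (tU p gK) (tI p.+1 iF))
     (tAdd (tSc (- (q ^- 3 * c))
              (tMul (tMul (tMul (tU p gF) (tU p gF)) (tU p gK)) (tI p.+1 iX)))
     (tAdd (tSc (q^-1 * (q + q^-1)) (tMul (tMul (tU p gF) (tU p gK)) (tI p.+1 iKi)))
           (tSc (- q^-1) (tMul (tMul (tU p gF) (tU p gK)) (tI p.+1 iL)))))
  | iKi => tAdd (tI p.+1 iKi) (tSc (- (q^-1 * c)) (tMul (tU p gF) (tI p.+1 iX)))
  | iL => tI p.+1 iL
  end.

Fixpoint tau_steps (K : fieldType) (q : K) (p cnt : nat) (t : term K) : term K :=
  match cnt with
  | 0 => t
  | cnt'.+1 => tau_steps q p.+1 cnt' (tsubst p (tau_img q p) t)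
  end.

(* the map mu: last factor at position p, next element a of the set (a > p):
   Delta at position p, then tau_R at positions p+1, ..., a-1 *)
Definition extend (K : fieldType) (q : K) (p a : nat) (t : term K) : term K :=
  tau_steps q p.+1 (a - p.+1) (tsubst p (delta_img q p) t).

Fixpoint lam_aux (K : fieldType) (q : K) (p : nat) (s : seq nat) (t : term K) :=
  match s with
  | [::] => t
  | a :: s' => lam_aux q a s' (extend q p a t)
  end.

(* Lambda_A for A = s (increasing list of positions) *)
Definition lam_term (K : fieldType) (q : K) (s : seq nat) : term K :=
  match s with
  | [::] => tC 1
  | a :: s' => lam_aux q a s' (tI a iL)
  end.

Definition casimir (K : fieldType) (q : K) (R : algType K) (e f k ki : nat -> R) p : R :=
  (q - q^-1) ^+ 2 *: (e p * f p) + q^-1 *: k p + q *: ki p.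

Definition ugen_val (K : fieldType) (R : algType K) (e f k ki : nat -> R) p g : R :=
  match g with gE => e p | gF => f p | gK => k p | gKi => ki p end.

Fixpoint teval (K : fieldType) (q : K) (R : algType K) (e f k ki : nat -> R)
    (t : term K) : R :=
  match t with
  | tC c => c%:A
  | tAdd a b => teval q e f k ki a + teval q e f k ki b
  | tMul a b => teval q e f k ki a * teval q e f k ki b
  | tU p g => ugen_val e f k ki p g
  | tI p g => match g with
              | iX => e p * ki p
              | iF => f p
              | iKi => ki p
              | iL => casimir q e f k ki p
              end
  end.

(* Lambda_A for A a subset of [1;n] (element x : 'I_n is position x+1) *)
Definition LambdaA (K : fieldType) (q : K) (R : algType K) (e f k ki : nat -> R)
    (n : nat) (A : {set 'I_n}) : R :=
  teval q e f k ki (lam_term q (sort leq [seq (val x).+1 | x <- enum A])).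

Definition uq_tensor_rels (K : fieldType) (q : K) (R : algType K)
    (e f k ki : nat -> R) (n : nat) : Prop :=
  (forall p, (0 < p <= n)%N ->
     [/\ k p * ki p = 1, ki p * k p = 1,
         k p * e p = q ^+ 2 *: (e p * k p),
         k p * f p = q ^- 2 *: (f p * k p)
       & e p * f p - f p * e p = (q - q^-1)^-1 *: (k p - ki p)]) /\
  (forall p p', (0 < p <= n)%N -> (0 < p' <= n)%N -> p != p' ->
     forall g g', GRing.comm (ugen_val e f k ki p g) (ugen_val e f k ki p' g')).

Definition ivl (n lo hi : nat) : {set 'I_n} := [set x : 'I_n | (lo <= x.+1 <= hi)%N].

Definition setA (n k : nat) (i j : nat -> nat) : {set 'I_n} :=
  ivl n 1 (j 1) :|: \bigcup_(2 <= m < k.+1) ivl n (i m) (j m).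

(* Main.v *)
Require Import Defs.
From HB Require Import structures.
From mathcomp Require Import all_boot all_order all_algebra.
From mathcomp Require Import ring zify.
Set Implicit Arguments. Unset Strict Implicit. Unset Printing Implicit Defensive.
Import GRing.Theory.
Local Open Scope ring_scope.

(* ---------- Laurent polynomial coefficients (computational) ---------- *)
Definition laur := (nat * seq int)%type.

Fixpoint cadd (a b : seq int) : seq int :=
  match a, b with
  | [::], _ => b
  | _, [::] => a
  | x :: a', y :: b' => (x + y) :: cadd a' b'
  end.
Definition cscale (c : int) (b : seq int) := map (fun y => c * y) b.
Fixpoint cmul (a b : seq int) : seq int :=
  match a with
  | [::] => [::]
  | x :: a' => cadd (cscale x b) (0 :: cmul a' b)
  end.
Definition ladd (x y : laur) : laur :=
  let s := maxn x.1 y.1 in (s, cadd (ncons (s - x.1) 0 x.2) (ncons (s - y.1) 0 y.2)).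
Definition lmul (x y : laur) : laur := (x.1 + y.1, cmul x.2 y.2).
Definition lzero (x : laur) := all (fun c => c == 0) x.2.

Definition nterm := (laur * seq nat)%type.
Definition npoly := seq nterm.
Definition rules := seq (nat * nat * npoly).

Fixpoint lookup (rs : rules) (a b : nat) : option npoly :=
  match rs with
  | [::] => None
  | (a', b', r) :: rs' => if (a' == a) && (b' == b) then Some r else lookup rs' a b
  end.

Fixpoint redex (rs : rules) (m : seq nat) : option (seq nat * npoly * seq nat) :=
  match m with
  | a :: m' =>
    match m' with
    | b :: w =>
      match lookup rs a b with
      | Some r => Some ([::], r, w)
      | None => match redex rs m' with
                | Some (u, r, w') => Some (a :: u, r, w')
                | None => None
                end
      end
    | [::] => None
    end
  | [::] => None
  end.

Fixpoint nf_term (rs : rules) (fuel : nat) (c : laur) (m : seq nat) : npoly :=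
  match fuel with
  | 0 => [:: (c, m)]
  | fuel'.+1 =>
    match redex rs m with
    | None => [:: (c, m)]
    | Some (u, r, w) =>
      flatten [seq nf_term rs fuel' (lmul c t.1) (u ++ t.2 ++ w) | t <- r]
    end
  end.

Definition nf (rs : rules) (fuel : nat) (p : npoly) : npoly :=
  flatten [seq nf_term rs fuel t.1 t.2 | t <- p].

Fixpoint ins (t : nterm) (p : npoly) : npoly :=
  match p with
  | [::] => [:: t]
  | t' :: p' => if t'.2 == t.2 then (ladd t'.1 t.1, t.2) :: p' else t' :: ins t p'
  end.
Definition collect (p : npoly) := foldr ins [::] p.
Definition pzero (p : npoly) := all (fun t => lzero t.1) p.

Definition ncheck rs fuel p := pzero (collect (nf rs fuel p)).

Definition l1 : laur := (0%N, [:: 1]).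
Definition lneg1 : laur := (0%N, [:: -1]).
Definition pat (a : nat) : npoly := [:: (l1, [:: a])].
Definition pone : npoly := [:: (l1, [::])].
Definition pmul (p r : npoly) : npoly :=
  [seq (lmul t.1 u.1, t.2 ++ u.2) | t <- p, u <- r].
Definition psc (c : laur) (p : npoly) : npoly := [seq (lmul c t.1, t.2) | t <- p].
Definition padd (p r : npoly) : npoly := p ++ r.
Definition pneg p := psc lneg1 p.
Definition msubst (s : nat -> npoly) (m : seq nat) : npoly :=
  foldr (fun a acc => pmul (s a) acc) pone m.
Definition psubst (s : nat -> npoly) (p : npoly) : npoly :=
  flatten [seq psc t.1 (msubst s t.2) | t <- p].
Definition rename (f : nat -> nat) (p : npoly) : npoly := [seq (t.1, map f t.2) | t <- p].
Definition rrename (f : nat -> nat) (rs : rules) : rules :=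
  [seq (f x.1.1, f x.1.2, rename f x.2) | x <- rs].
Definition relpoly (x : nat * nat * npoly) : npoly :=
  (l1, [:: x.1.1; x.1.2]) :: pneg x.2.

Section Sem.
Variable (K : fieldType) (q : K) (R : algType K).
Hypothesis hq0 : q != 0.

Fixpoint ceval (a : seq int) : K :=
  match a with [::] => 0 | x :: a' => x%:~R + q * ceval a' end.
Definition leval (x : laur) : K := ceval x.2 / q ^+ x.1.

Lemma ceval_add a b : ceval (cadd a b) = ceval a + ceval b.
Proof.
elim: a b => [|x a IH] [|y b] /=; rewrite ?add0r ?addr0 //.
by rewrite IH rmorphD mulrDr addrACA.
Qed.
Lemma ceval_scale c b : ceval (cscale c b) = c%:~R * ceval b.
Proof.
elim: b => [|y b IH] /=; first by rewrite mulr0.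
by rewrite IH rmorphM mulrDr mulrCA.
Qed.
Lemma ceval_mul a b : ceval (cmul a b) = ceval a * ceval b.
Proof.
elim: a => [|x a IH] /=; first by rewrite mul0r.
by rewrite ceval_add ceval_scale /= IH add0r mulrDl mulrA.
Qed.
Lemma ceval_ncons n a : ceval (ncons n 0 a) = q ^+ n * ceval a.
Proof.
elim: n => [|n IH] /=; first by rewrite mul1r.
by rewrite IH add0r exprS mulrA.
Qed.
Lemma leval_add x y : leval (ladd x y) = leval x + leval y.
Proof.
case: x y => [s a] [t b]; rewrite /leval /ladd /= ceval_add !ceval_ncons.
have qu : forall k, q ^+ k != 0 by move=> k; rewrite expf_neq0.
set m := maxn s t.
have Hs : m = (m - s + s)%N by rewrite subnK // leq_maxl.
have Ht : m = (m - t + t)%N by rewrite subnK // leq_maxr.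
rewrite mulrDl; congr (_ + _).
  by rewrite [in q ^+ m]Hs exprD invfM !mulrA [q ^+ (m - s) * _]mulrC mulfK.
by rewrite [in q ^+ m]Ht exprD invfM !mulrA [q ^+ (m - t) * _]mulrC mulfK.
Qed.
Lemma leval_mul x y : leval (lmul x y) = leval x * leval y.
Proof.
case: x y => [s a] [t b]; rewrite /leval /lmul /= ceval_mul exprD invfM.
by rewrite mulrACA.
Qed.
Lemma leval_zero x : lzero x -> leval x = 0.
Proof.
case: x => s a; rewrite /lzero /leval /= => H.
suff -> : ceval a = 0 by rewrite mul0r.
by elim: a H => [|y a IH] //= /andP [/eqP -> /IH ->]; rewrite mulr0 addr0.
Qed.
Lemma leval1 : leval l1 = 1.
Proof. by rewrite /leval /= mulr0 addr0 expr0 invr1 mulr1. Qed.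
Lemma levaln1 : leval lneg1 = -1.
Proof. by rewrite /leval /= mulr0 addr0 expr0 invr1 mulr1. Qed.

Variable v : nat -> R.
Definition meval (m : seq nat) : R := foldr (fun a acc => v a * acc) 1 m.
Definition teval (t : nterm) : R := leval t.1 *: meval t.2.
Definition peval (p : npoly) : R := \sum_(t <- p) teval t.

Lemma meval_cat u w : meval (u ++ w) = meval u * meval w.
Proof. by elim: u => [|a u IH] /=; rewrite ?mul1r // IH mulrA. Qed.

Lemma peval_cat p r : peval (p ++ r) = peval p + peval r.
Proof. by rewrite /peval big_cat. Qed.
Lemma peval_cons t p : peval (t :: p) = teval t + peval p.
Proof. by rewrite /peval big_cons. Qed.
Lemma peval_nil : peval [::] = 0.
Proof. by rewrite /peval big_nil. Qed.
Lemma peval_flatten (ps : seq npoly) : peval (flatten ps) = \sum_(p <- ps) peval p.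
Proof.
elim: ps => [|p ps IH] /=; first by rewrite peval_nil big_nil.
by rewrite peval_cat IH big_cons.
Qed.

Fixpoint rules_ok (rs : rules) : Prop :=
  match rs with
  | [::] => True
  | (a, b, r) :: rs' => v a * v b = peval r /\ rules_ok rs'
  end.

Lemma rules_ok_cat rs1 rs2 : rules_ok (rs1 ++ rs2) <-> rules_ok rs1 /\ rules_ok rs2.
Proof.
elim: rs1 => [|[[a b] r] rs1 IH] /=; first by split=> // [[]].
split=> [[H1 /IH [H2 H3]]|[[H1 H2] H3]]; first by split.
by split=> //; apply/IH.
Qed.

Lemma lookup_ok rs a b r : rules_ok rs -> lookup rs a b = Some r -> v a * v b = peval r.
Proof.
elim: rs => [|[[a' b'] r'] rs IH] //= [H1 H2].
case: ifP => [/andP [/eqP <- /eqP <-] [<-] //|_]; exact: IH.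
Qed.

Lemma redex_ok rs m u r w : rules_ok rs -> redex rs m = Some (u, r, w) ->
  meval m = meval u * peval r * meval w.
Proof.
move=> Hr; elim: m u => [|a m IH] u //=.
case: m IH => [|b w'] IH //.
case E: (lookup rs a b) => [r'|].
  case=> <- <- <-.
  by rewrite /= mul1r mulrA (lookup_ok Hr E).
case E2: (redex rs (b :: w')) => [[[u' r'] w'']|] //.
case=> <- Er Ew; subst r' w''.
change (meval (a :: b :: w')) with (v a * meval (b :: w')).
by rewrite (IH _ E2) /= !mulrA.
Qed.

Lemma psum_scale (c : K) (p : npoly) :
  \sum_(t <- p) c *: teval t = c *: peval p.
Proof. by rewrite /peval scaler_sumr. Qed.

Lemma nf_term_ok rs fuel c m : rules_ok rs ->
  peval (nf_term rs fuel c m) = leval c *: meval m.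
Proof.
move=> Hr; elim: fuel c m => [|fuel IH] c m /=.
  by rewrite peval_cons peval_nil addr0.
case E: (redex rs m) => [[[u r] w]|]; last by rewrite peval_cons peval_nil addr0.
rewrite peval_flatten big_map (redex_ok Hr E).
under eq_bigr => t _ do rewrite IH leval_mul !meval_cat -scalerA.
rewrite /peval -scaler_sumr; congr (_ *: _).
rewrite mulr_sumr mulr_suml; apply: eq_bigr => t _.
by rewrite /teval -scalerAr -scalerAl mulrA.
Qed.

Lemma nf_ok rs fuel p : rules_ok rs -> peval (nf rs fuel p) = peval p.
Proof.
move=> Hr; rewrite /nf peval_flatten big_map [in RHS]/peval; apply: eq_bigr => t _.
by rewrite nf_term_ok.
Qed.

Lemma ins_ok t p : peval (ins t p) = teval t + peval p.
Proof.
elim: p => [|t' p IH] /=; first by rewrite peval_cons.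
case: ifP => [/eqP E|_]; rewrite !peval_cons.
  by rewrite /teval /= leval_add scalerDl E addrA (addrC (_ *: _)).
by rewrite IH addrCA.
Qed.

Lemma collect_ok p : peval (collect p) = peval p.
Proof.
elim: p => [|t p IH] /=; first by [].
by rewrite ins_ok IH peval_cons.
Qed.

Lemma pzero_ok p : pzero p -> peval p = 0.
Proof.
elim: p => [|t p IH] /=; first by rewrite peval_nil.
by move=> /andP [H1 H2]; rewrite peval_cons IH // /teval leval_zero // scale0r addr0.
Qed.

Lemma ncheck_ok rs fuel p : rules_ok rs -> ncheck rs fuel p -> peval p = 0.
Proof.
move=> Hr H; rewrite -(nf_ok fuel p Hr) -collect_ok; exact: pzero_ok.
Qed.

Lemma peval_pat a : peval (pat a) = v a.
Proof. by rewrite /pat peval_cons peval_nil addr0 /teval leval1 scale1r /= mulr1. Qed.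
Lemma peval_pone : peval pone = 1.
Proof. by rewrite /pone peval_cons peval_nil addr0 /teval leval1 scale1r. Qed.
Lemma peval_padd p r : peval (padd p r) = peval p + peval r.
Proof. exact: peval_cat. Qed.
Lemma peval_psc c p : peval (psc c p) = leval c *: peval p.
Proof.
rewrite /psc /peval big_map scaler_sumr; apply: eq_bigr => t _.
by rewrite /teval /= leval_mul scalerA.
Qed.
Lemma peval_pneg p : peval (pneg p) = - peval p.
Proof. by rewrite /pneg peval_psc levaln1 scaleN1r. Qed.
Lemma peval_pmul p r : peval (pmul p r) = peval p * peval r.
Proof.
elim: p => [|t p IH]; first by rewrite /pmul /= !peval_nil mul0r.
rewrite /pmul /= peval_cat -/(pmul p r) IH peval_cons mulrDl; congr (_ + _).
rewrite /peval big_map mulr_sumr; apply: eq_bigr => u _.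
by rewrite /teval /= leval_mul meval_cat -scalerA -scalerAl -scalerAr.
Qed.
Lemma peval_relpoly x : peval (relpoly x) = v x.1.1 * v x.1.2 - peval x.2.
Proof.
rewrite /relpoly peval_cons peval_pneg /teval leval1 scale1r /= mulr1 //.
Qed.
End Sem.

Section Subst.
Variable (K : fieldType) (q : K) (R : algType K).
Lemma peval_ext (v w : nat -> R) p : (forall a, v a = w a) -> peval q v p = peval q w p.
Proof.
move=> H; rewrite /peval; apply: eq_bigr => t _; rewrite /teval; congr (_ *: _).
by elim: t.2 => [|a m IH] //=; rewrite IH H.
Qed.
Lemma peval_rename (v : nat -> R) f p : peval q v (rename f p) = peval q (fun a => v (f a)) p.
Proof.
rewrite /rename /peval big_map; apply: eq_bigr => t _; rewrite /teval /=; congr (_ *: _).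
by elim: t.2 => [|a m IH] //=; rewrite IH.
Qed.
Lemma rules_ok_rename (v : nat -> R) f rs :
  rules_ok q v (rrename f rs) <-> rules_ok q (fun a => v (f a)) rs.
Proof.
elim: rs => [|[[a b] r] rs IH] //=; rewrite peval_rename.
by split=> [[H1 /IH H2]|[H1 /IH H2]].
Qed.
Lemma rules_ok_ext (v w : nat -> R) rs : (forall a, v a = w a) ->
  rules_ok q v rs -> rules_ok q w rs.
Proof.
move=> H; elim: rs => [|[[a b] r] rs IH] //= [H1 H2]; split; last exact: IH.
by rewrite -!H H1; apply: peval_ext.
Qed.
Lemma peval_psubst (v : nat -> R) s p :
  peval q v (psubst s p) = peval q (fun a => peval q v (s a)) p.
Proof.
rewrite /psubst peval_flatten big_map /peval; apply: eq_bigr => t _.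
rewrite -/(peval q v _) peval_psc /teval; congr (_ *: _).
elim: t.2 => [|a m IH] /=; first by rewrite peval_pone.
by rewrite /msubst /= peval_pmul -/(msubst s m) IH.
Qed.

Lemma rules_transfer (v : nat -> R) (ctx : rules) fuel (s : nat -> npoly) (rs : rules) :
  q != 0 -> rules_ok q v ctx ->
  all (fun x => ncheck ctx fuel (psubst s (relpoly x))) rs ->
  rules_ok q (fun a => peval q v (s a)) rs.
Proof.
move=> hq Hc; elim: rs => [|[[a b] r] rs IH] //= /andP [H1 H2]; split; last exact: IH.
have := ncheck_ok hq Hc H1; rewrite peval_psubst peval_relpoly /=.
by move/eqP; rewrite subr_eq0 => /eqP.
Qed.
End Subst.

Definition patoms (p : npoly) : seq nat := flatten [seq t.2 | t <- p].
Definition ratoms (rs : rules) : seq nat :=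
  flatten [seq x.1.1 :: x.1.2 :: patoms x.2 | x <- rs].
Definition commrules (s1 s2 : seq nat) : rules :=
  [seq (a, b, [:: (l1, [:: b; a])]) | a <- s1, b <- s2].

Section Ext.
Variable (K : fieldType) (q : K) (R : algType K).
Lemma peval_ext_in (v w : nat -> R) p : {in patoms p, v =1 w} -> peval q v p = peval q w p.
Proof.
move=> H; rewrite /peval big_seq_cond [RHS]big_seq_cond; apply: eq_bigr => t /andP [Ht _].
rewrite /teval; congr (_ *: _).
have : {subset t.2 <= patoms p}.
  by move=> a Ha; apply/flattenP; exists t.2 => //; apply: map_f.
elim: t.2 => [|a m IH] //= Hs; rewrite IH ?H ?Hs ?mem_head //.
by move=> b Hb; apply: Hs; rewrite in_cons Hb orbT.
Qed.
Lemma rules_ok_ext_in (v w : nat -> R) rs : {in ratoms rs, v =1 w} ->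
  rules_ok q v rs -> rules_ok q w rs.
Proof.
elim: rs => [|[[a b] r] rs IH] //= H [H1 H2]; split.
  rewrite -!H ?H1 ?in_cons ?eqxx ?orbT //; apply: peval_ext_in => x Hx; apply: H.
  by rewrite /ratoms /= !in_cons mem_cat Hx !orbT.
by apply: IH => // x Hx; apply: H; rewrite /ratoms /= !in_cons mem_cat -/(ratoms rs) Hx !orbT.

Qed.
Lemma peval_comm (v : nat -> R) p x : (forall a, a \in patoms p -> GRing.comm x (v a)) ->
  GRing.comm x (peval q v p).
Proof.
move=> H; rewrite /peval big_seq; apply: commr_sum => t Ht; rewrite /teval.
suff Hm : GRing.comm x (meval v t.2).
  by rewrite /GRing.comm -scalerAr -scalerAl Hm.
have : {subset t.2 <= patoms p}.
  by move=> a Ha; apply/flattenP; exists t.2 => //; apply: map_f.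
elim: t.2 => [|a m IH] /= Hs; first exact: commr1.
apply: commrM; first by apply: H; apply: Hs; rewrite mem_head.
by apply: IH => b Hb; apply: Hs; rewrite in_cons Hb orbT.
Qed.
Lemma commrules_ok1 (v : nat -> R) a s2 :
  (forall b, b \in s2 -> v a * v b = v b * v a) ->
  rules_ok q v [seq (a, b, [:: (l1, [:: b; a])]) | b <- s2].
Proof.
elim: s2 => [|b s2 IH] //= H; split.
  rewrite peval_cons peval_nil addr0 /teval leval1 scale1r /= mulr1; apply: H.
  by rewrite mem_head.
by apply: IH => y Hy; apply: H; rewrite in_cons Hy orbT.
Qed.
Lemma commrules_ok (v : nat -> R) s1 s2 :
  (forall a b, a \in s1 -> b \in s2 -> v a * v b = v b * v a) ->
  rules_ok q v (commrules s1 s2).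
Proof.
elim: s1 => [|a s1 IH] //= H; rewrite /commrules /= -/(commrules s1 s2).
apply/rules_ok_cat; split; last by apply: IH => x y Hx Hy; apply: H => //; rewrite in_cons Hx orbT.
by apply: commrules_ok1 => b Hb; apply: H; rewrite ?mem_head.
Qed.
End Ext.

Definition U0 : rules :=
  [:: (3, 0, [:: ((0%N, [:: 1]), [:: 0; 3]); ((1%N, [:: (-1); 0; 1]), [:: 1]); ((1%N, [:: 1; 0; (-1)]), [:: 2])]);
  (1, 0, [:: ((2%N, [:: 1]), [:: 0; 1])]);
  (2, 0, [:: ((0%N, [:: 0; 0; 1]), [:: 0; 2])]);
  (3, 1, [:: ((2%N, [:: 1]), [:: 1; 3])]);
  (3, 2, [:: ((0%N, [:: 0; 0; 1]), [:: 2; 3])]);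
  (1, 2, [:: ((0%N, [:: 1]), [:: ])]);
  (2, 1, [:: ((0%N, [:: 1]), [:: ])])].
Definition IR0 : rules :=
  [:: (2, 0, [:: ((2%N, [:: 1]), [:: 0; 2])]);
  (2, 1, [:: ((0%N, [:: 0; 0; 1]), [:: 1; 2])]);
  (0, 1, [:: ((0%N, [:: 0; 0; 1]), [:: 2; 3]); ((0%N, [:: 0; (-1)]), [:: ]); ((0%N, [:: 0; 0; 0; (-1)]), [:: 2; 2])]);
  (1, 0, [:: ((0%N, [:: 1]), [:: 2; 3]); ((0%N, [:: 0; (-1)]), [:: ]); ((1%N, [:: (-1)]), [:: 2; 2])]);
  (3, 0, [:: ((0%N, [:: 1]), [:: 0; 3])]);
  (3, 1, [:: ((0%N, [:: 1]), [:: 1; 3])]);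
  (3, 2, [:: ((0%N, [:: 1]), [:: 2; 3])])].
Definition CR0 : rules :=
  [:: (0, 4, [:: ((0%N, [:: 1]), [:: 4; 0])]);
  (0, 5, [:: ((0%N, [:: 1]), [:: 5; 0]); ((1%N, [:: 1; 0; 0; 0; (-1)]), [:: 6; 2]); ((0%N, [:: (-1); 0; 1]), [:: 7; 2])]);
  (0, 6, [:: ((2%N, [:: (-1); 0; 1]), [:: 4; 2]); ((0%N, [:: 1]), [:: 6; 0])]);
  (0, 7, [:: ((0%N, [:: 1]), [:: 7; 0])]);
  (1, 4, [:: ((0%N, [:: 1]), [:: 4; 1]); ((1%N, [:: (-1); 0; 0; 0; 1]), [:: 6; 2]); ((0%N, [:: 1; 0; (-1)]), [:: 7; 2])]);
  (1, 5, [:: ((0%N, [:: 1]), [:: 5; 1])]);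
  (1, 6, [:: ((0%N, [:: 1; 0; (-1)]), [:: 5; 2]); ((0%N, [:: 1]), [:: 6; 1])]);
  (1, 7, [:: ((0%N, [:: 1]), [:: 7; 1])]);
  (2, 4, [:: ((2%N, [:: 1]), [:: 4; 2])]);
  (2, 5, [:: ((0%N, [:: 0; 0; 1]), [:: 5; 2])]);
  (2, 6, [:: ((0%N, [:: 1]), [:: 6; 2])]);
  (2, 7, [:: ((0%N, [:: 1]), [:: 7; 2])]);
  (3, 4, [:: ((3%N, [:: 1; 0; 0; 0; (-1)]), [:: 4; 2]); ((0%N, [:: 0; 0; 1]), [:: 4; 3]); ((1%N, [:: (-1); 0; 0; 0; 1]), [:: 6; 0]); ((0%N, [:: 1; 0; (-1)]), [:: 7; 0])]);
  (3, 5, [:: ((1%N, [:: (-1); 0; 0; 0; 1]), [:: 5; 2]); ((2%N, [:: 1]), [:: 5; 3]); ((3%N, [:: 1; 0; 0; 0; (-1)]), [:: 6; 1]); ((2%N, [:: (-1); 0; 1]), [:: 7; 1])]);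
  (3, 6, [:: ((2%N, [:: (-1); 0; 1]), [:: 4; 1]); ((2%N, [:: 1; 0; (-1)]), [:: 5; 0]); ((3%N, [:: 1; 0; (-1); 0; (-1); 0; 1]), [:: 6; 2]); ((0%N, [:: 1]), [:: 6; 3]); ((2%N, [:: (-1); 0; 2; 0; (-1)]), [:: 7; 2])]);
  (3, 7, [:: ((0%N, [:: 1]), [:: 7; 3])])].
Definition COMM0 : rules := commrules (iota 4 4) (iota 0 4).
Definition Dpoly0 (g : nat) : npoly :=
  match g with
  | 0 => [:: ((0%N, [:: 1]), [:: 3; 2; 6]); ((0%N, [:: 1]), [:: 4])]
  | 1 => [:: ((0%N, [:: 1]), [:: 0; 6]); ((0%N, [:: 1]), [:: 5])]
  | 2 => [:: ((0%N, [:: 1]), [:: 2; 6])]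
  | _ => [:: ((0%N, [:: 1]), [:: 3; 0; 6]); ((0%N, [:: 1]), [:: 3; 5]); ((0%N, [:: 1]), [:: 1; 0; 4]); ((0%N, [:: 1]), [:: 1; 7]); ((0%N, [:: 0; (-1)]), [:: 1; 6]); ((0%N, [:: 0; 1]), [:: 2; 6])]
  end.
Definition Tpoly0 (g : nat) : npoly :=
  match g with
  | 0 => [:: ((0%N, [:: 1]), [:: 2; 4])]
  | 1 => [:: ((0%N, [:: 1]), [:: 1; 5]); ((3%N, [:: (-1)]), [:: 0; 0; 1; 4]); ((2%N, [:: 1; 0; 1]), [:: 0; 1; 6]); ((1%N, [:: (-1)]), [:: 0; 1; 7])]
  | 2 => [:: ((0%N, [:: 1]), [:: 6]); ((1%N, [:: (-1)]), [:: 0; 4])]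
  | _ => [:: ((0%N, [:: 1]), [:: 7])]
  end.
Definition Std0 (g : nat) : npoly :=
  match g with
  | 0 => [:: ((0%N, [:: 1]), [:: 3; 2])]
  | 1 => [:: ((0%N, [:: 1]), [:: 0])]
  | 2 => [:: ((0%N, [:: 1]), [:: 2])]
  | _ => [:: ((0%N, [:: 1]), [:: 3; 0]); ((1%N, [:: 1]), [:: 1]); ((0%N, [:: 0; 1]), [:: 2])]
  end.

Definition shB (a : nat) : nat := if (a < 4)%N then a else (a + 4)%N.
Definition ctx1 : rules := U0 ++ rrename (addn 4) IR0 ++ COMM0.
Definition ctx2 : rules := U0 ++ rrename (addn 4) IR0 ++ rrename (addn 8) IR0 ++ COMM0
   ++ rrename shB COMM0 ++ rrename (addn 4) CR0.
Definition fuel := 200%N.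
Definition sDD (a : nat) : npoly := if (a < 4)%N then Dpoly0 a else rename shB (Dpoly0 (a - 4)).
Definition sDT (a : nat) : npoly := if (a < 4)%N then Dpoly0 a else rename shB (Tpoly0 (a - 4)).
Definition sTT (a : nat) : npoly := if (a < 4)%N then Tpoly0 a else rename shB (Tpoly0 (a - 4)).
Definition sDS (a : nat) : npoly := if (a < 4)%N then Dpoly0 a else Std0 (a - 4).
Definition sSS (a : nat) : npoly := if (a < 4)%N then Std0 a else Std0 (a - 4).
Definition chk ctx s rs := all (fun x => ncheck ctx fuel (psubst s (relpoly x))) rs.

Lemma chk_std : chk U0 Std0 IR0. Proof. by vm_compute. Qed.
Lemma chk_D : chk ctx1 Dpoly0 IR0. Proof. by vm_compute. Qed.
Lemma chk_T : chk ctx1 Tpoly0 IR0. Proof. by vm_compute. Qed.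
Lemma chk_DD : chk ctx2 sDD CR0. Proof. Time by vm_compute. Qed.
Lemma chk_DT : chk ctx2 sDT CR0. Proof. Time by vm_compute. Qed.
Lemma chk_TT : chk ctx2 sTT CR0. Proof. Time by vm_compute. Qed.
Lemma chk_DS : chk ctx1 sDS CR0. Proof. Time by vm_compute. Qed.
Lemma chk_SS : chk U0 sSS CR0. Proof. Time by vm_compute. Qed.

Lemma U0_atoms : all (fun a => a < 4)%N (ratoms U0). Proof. by vm_compute. Qed.
Lemma IR0_atoms : all (fun a => a < 4)%N (ratoms IR0). Proof. by vm_compute. Qed.
Lemma CR0_atoms : all (fun a => a < 8)%N (ratoms CR0). Proof. by vm_compute. Qed.
Lemma COMM0_atoms : all (fun a => a < 8)%N (ratoms COMM0). Proof. by vm_compute. Qed.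
Lemma Dpoly0_atoms g : all (fun a => a < 8)%N (patoms (Dpoly0 g)).
Proof. by case: g => [|[|[|g]]]; vm_compute. Qed.
Lemma Tpoly0_atoms g : all (fun a => a < 8)%N (patoms (Tpoly0 g)).
Proof. by case: g => [|[|[|g]]]; vm_compute. Qed.
Lemma Std0_atoms g : all (fun a => a < 4)%N (patoms (Std0 g)).
Proof. by case: g => [|[|[|g]]]; vm_compute. Qed.

Section Sem.
Variable (K : fieldType) (q : K) (R : algType K) (e f kk ki : nat -> R) (n : nat).
Hypothesis hq0 : q != 0.
Hypothesis hd : q - q^-1 != 0.
Hypothesis hrel : uq_tensor_rels q e f kk ki n.

Definition dd := q - q^-1.
Definition Uval (p : nat) : nat -> R := fun a =>
  match a with 0 => f p | 1 => kk p | 2 => ki p | _ => dd ^+ 2 *: e p end.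
Definition join (u Q : nat -> R) a := if (a < 4)%N then u a else Q (a - 4)%N.
Definition DR p Q a := peval q (join (Uval p) Q) (Dpoly0 a).
Definition TR p Q a := peval q (join (Uval p) Q) (Tpoly0 a).
Definition SR p a := peval q (Uval p) (Std0 a).
Definition IRok (Q : nat -> R) := rules_ok q Q IR0.
Definition CRok (QA QB : nat -> R) := rules_ok q (join QA QB) CR0.
Definition Ucomm p (Q : nat -> R) := forall a u, GRing.comm (Uval p u) (Q a).
Definition valid p := (0 < p <= n)%N.

Lemma hdd : dd != 0. Proof. exact: hd. Qed.
Lemma hqq : q * q - 1 != 0.
Proof.
apply: contra hd => /eqP H; apply/eqP.
have -> : q - q^-1 = (q * q - 1) / q by field.
by rewrite H mul0r.
Qed.

Ltac fld := field; rewrite ?hq0 ?hd ?hqq ?oner_eq0 ?andbT //.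
Ltac lsimp := rewrite /leval /= ?rmorph0 ?rmorph1 ?rmorphN1.

Lemma U0_ok p : valid p -> rules_ok q (Uval p) U0.
Proof.
move=> hp; case: hrel => /(_ p hp) [H1 H2 H3 H4 H5] _.
have kiE : ki p * e p = q ^- 2 *: (e p * ki p).
  have := congr1 (fun x => ki p * x * ki p) H3.
  rewrite -!scalerAr -!scalerAl !mulrA H2 mul1r -!mulrA H1 mulr1 => ->.
  by rewrite scalerA mulVf ?scale1r // expf_neq0.
have kiF : ki p * f p = q ^+ 2 *: (f p * ki p).
  have := congr1 (fun x => ki p * x * ki p) H4.
  rewrite -!scalerAr -!scalerAl !mulrA H2 mul1r -!mulrA H1 mulr1 => ->.
  by rewrite scalerA mulfV ?scale1r // expf_neq0.
rewrite /U0 /=; rewrite !peval_cons !peval_nil /teval /= !addr0 !mulr1.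
lsimp.
have ef : e p * f p = f p * e p + dd^-1 *: (kk p - ki p) by rewrite -H5 addrC subrK.
have E1 : forall (a b : K) (x : R), a = b -> a *: x = b *: x by move=> a b x ->.
split.
  rewrite -scalerAl -scalerAr ef scalerDr scalerA scalerBr scalerA; congr (_ + _).
    by apply: E1; rewrite /dd; fld.
  rewrite -scaleNr; congr (_ + _); apply: E1; rewrite /dd; fld.
split; first by rewrite H4; apply: E1; fld.
split; first by rewrite kiF; apply: E1; fld.
split; first by rewrite -scalerAl -scalerAr H3 scalerA scalerA; apply: E1; fld.
split; first by rewrite -scalerAl -scalerAr kiE scalerA scalerA; apply: E1; fld.
split; first by rewrite H1 -[1 in LHS]scale1r; apply: E1; fld.
split; first by rewrite H2 -[1 in LHS]scale1r; apply: E1; fld.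
by [].
Qed.

Lemma join_low (u Q : nat -> R) a : (a < 4)%N -> join u Q a = u a.
Proof. by rewrite /join => ->. Qed.
Lemma join_high (u Q : nat -> R) a : join u Q (4 + a) = Q a.
Proof. by rewrite /join ltnNge leq_addr /= addKn. Qed.
Lemma ext_in_bound (v w : nat -> R) (b : nat) s : all (fun a => a < b)%N s ->
  (forall a, (a < b)%N -> v a = w a) -> {in s, v =1 w}.
Proof. by move=> /allP H Hv a Ha; apply: Hv; apply: H. Qed.

Lemma Uval_comm p p' u b : valid p -> valid p' -> p != p' ->
  GRing.comm (Uval p' u) (Uval p b).
Proof.
case: hrel => _ H hp hp' hne.
have G : forall g g', GRing.comm (ugen_val e f kk ki p' g) (ugen_val e f kk ki p g').
  by move=> g g'; apply: H => //; rewrite eq_sym.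
have Z : forall (c : K) (x y : R), GRing.comm x y -> GRing.comm x (c *: y).
  by move=> c x y Hc; rewrite /GRing.comm -scalerAl -scalerAr Hc.
have Z' : forall (c : K) (x y : R), GRing.comm x y -> GRing.comm (c *: x) y.
  by move=> c x y Hc; rewrite /GRing.comm -scalerAl -scalerAr Hc.
case: u => [|[|[|u]]]; case: b => [|[|[|b]]] /=;
  try apply: Z; try apply: Z'; try apply: Z;
  first [exact: (G gF gF) | exact: (G gF gK) | exact: (G gF gKi) | exact: (G gF gE)
        | exact: (G gK gF) | exact: (G gK gK) | exact: (G gK gKi) | exact: (G gK gE)
        | exact: (G gKi gF) | exact: (G gKi gK) | exact: (G gKi gKi) | exact: (G gKi gE)
        | exact: (G gE gF) | exact: (G gE gK) | exact: (G gE gKi) | exact: (G gE gE)].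
Qed.

Lemma COMM0_ok p Q : Ucomm p Q -> rules_ok q (join (Uval p) Q) COMM0.
Proof.
move=> HC; apply: commrules_ok => a b; rewrite !mem_iota /= => /andP [Ha1 _] Hb.
rewrite /join Hb ltnNge Ha1 /=; exact: (esym (HC _ _)).
Qed.

Lemma ctx1_ok p Q : valid p -> IRok Q -> Ucomm p Q -> rules_ok q (join (Uval p) Q) ctx1.
Proof.
move=> hp HI HC; rewrite /ctx1; apply/rules_ok_cat; split.
  apply: (rules_ok_ext_in (v:=Uval p)); last exact: U0_ok.
  by apply: ext_in_bound U0_atoms _ => a Ha; rewrite join_low.
apply/rules_ok_cat; split.
  apply/rules_ok_rename; apply: (rules_ok_ext_in (v:=Q)) HI.
  by apply: ext_in_bound IR0_atoms _ => a _; rewrite join_high.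
exact: COMM0_ok.
Qed.

Definition v2 p (QA QB : nat -> R) := join (Uval p) (join QA QB).
Lemma v2_lowA p QA QB a : (a < 8)%N -> v2 p QA QB a = join (Uval p) QA a.
Proof.
move=> Ha; rewrite /v2 /join; case: ifP => // H.
by rewrite ifT // ltn_subLR // leqNgt H.
Qed.
Lemma v2_lowB p QA QB a : (a < 8)%N -> v2 p QA QB (shB a) = join (Uval p) QB a.
Proof.
move=> Ha; rewrite /v2 /join /shB; case: (ltnP a 4) => H4; first by rewrite H4.
rewrite ifF; last by rewrite ltnNge (leq_trans H4) // leq_addr.
by rewrite addnK ltnNge H4.
Qed.

Lemma ctx2_ok p QA QB : valid p -> IRok QA -> IRok QB -> CRok QA QB -> Ucomm p QA -> Ucomm p QB ->
  rules_ok q (v2 p QA QB) ctx2.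
Proof.
move=> hp HA HB HAB CA CB; rewrite /ctx2.
apply/rules_ok_cat; split.
  apply: (rules_ok_ext_in (v:=Uval p)); last exact: U0_ok.
  apply: ext_in_bound U0_atoms _ => a Ha; by rewrite /v2 join_low.
apply/rules_ok_cat; split.
  apply/rules_ok_rename; apply: (rules_ok_ext_in (v:=QA)) HA.
  by apply: ext_in_bound IR0_atoms _ => a Ha; rewrite /v2 join_high join_low.
apply/rules_ok_cat; split.
  apply/rules_ok_rename; apply: (rules_ok_ext_in (v:=QB)) HB.
  apply: ext_in_bound IR0_atoms _ => a Ha; rewrite /v2 (_ : 8 + a = 4 + (4 + a))%N //.
  by rewrite !join_high.
apply/rules_ok_cat; split.
  apply: (rules_ok_ext_in (v:=join (Uval p) QA)); last exact: COMM0_ok.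
  by apply: ext_in_bound COMM0_atoms _ => a Ha; rewrite v2_lowA.
apply/rules_ok_cat; split.
  apply/rules_ok_rename; apply: (rules_ok_ext_in (v:=join (Uval p) QB)); last exact: COMM0_ok.
  by apply: ext_in_bound COMM0_atoms _ => a Ha; rewrite v2_lowB.
apply/rules_ok_rename; apply: (rules_ok_ext (v:=join QA QB)) HAB => a.
by rewrite /v2 join_high.
Qed.

Lemma SR_IR p : valid p -> IRok (SR p).
Proof.
move=> hp; exact: (rules_transfer hq0 (U0_ok hp) chk_std).
Qed.
Lemma DR_IR p Q : valid p -> IRok Q -> Ucomm p Q -> IRok (DR p Q).
Proof. move=> hp HI HC; exact: (rules_transfer hq0 (ctx1_ok hp HI HC) chk_D). Qed.
Lemma TR_IR p Q : valid p -> IRok Q -> Ucomm p Q -> IRok (TR p Q).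
Proof. move=> hp HI HC; exact: (rules_transfer hq0 (ctx1_ok hp HI HC) chk_T). Qed.

Lemma pair_step (PA PB : nat -> npoly) p QA QB :
  valid p -> IRok QA -> IRok QB -> CRok QA QB -> Ucomm p QA -> Ucomm p QB ->
  chk ctx2 (fun a => if (a < 4)%N then PA a else rename shB (PB (a - 4)%N)) CR0 ->
  (forall g, all (fun a => a < 8)%N (patoms (PA g))) ->
  (forall g, all (fun a => a < 8)%N (patoms (PB g))) ->
  CRok (fun a => peval q (join (Uval p) QA) (PA a)) (fun a => peval q (join (Uval p) QB) (PB a)).
Proof.
move=> hp HA HB HAB CA CB Hc AtA AtB.
have := rules_transfer hq0 (ctx2_ok hp HA HB HAB CA CB) Hc.
apply: rules_ok_ext => a; rewrite /join; case: ifP => _.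
  by apply: peval_ext_in; apply: ext_in_bound (AtA a) _ => b Hb; rewrite v2_lowA.
rewrite peval_rename; apply: peval_ext_in; apply: ext_in_bound (AtB _) _ => b Hb.
by rewrite v2_lowB.
Qed.

Lemma DD_CR p QA QB : valid p -> IRok QA -> IRok QB -> CRok QA QB -> Ucomm p QA -> Ucomm p QB ->
  CRok (DR p QA) (DR p QB).
Proof. move=> hp HA HB HAB CA CB; exact: (pair_step hp HA HB HAB CA CB chk_DD Dpoly0_atoms Dpoly0_atoms). Qed.
Lemma DT_CR p QA QB : valid p -> IRok QA -> IRok QB -> CRok QA QB -> Ucomm p QA -> Ucomm p QB ->
  CRok (DR p QA) (TR p QB).
Proof. move=> hp HA HB HAB CA CB; exact: (pair_step hp HA HB HAB CA CB chk_DT Dpoly0_atoms Tpoly0_atoms). Qed.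
Lemma TT_CR p QA QB : valid p -> IRok QA -> IRok QB -> CRok QA QB -> Ucomm p QA -> Ucomm p QB ->
  CRok (TR p QA) (TR p QB).
Proof. move=> hp HA HB HAB CA CB; exact: (pair_step hp HA HB HAB CA CB chk_TT Tpoly0_atoms Tpoly0_atoms). Qed.

Lemma DS_CR p Q : valid p -> IRok Q -> Ucomm p Q -> CRok (DR p Q) (SR p).
Proof.
move=> hp HI HC.
have := rules_transfer hq0 (ctx1_ok hp HI HC) chk_DS.
apply: rules_ok_ext => a; rewrite /sDS [in RHS]/join; case: ifP => // _.
by apply: peval_ext_in; apply: ext_in_bound (Std0_atoms _) _ => b Hb; rewrite join_low.
Qed.
Lemma SS_CR p : valid p -> CRok (SR p) (SR p).
Proof.
move=> hp; have := rules_transfer hq0 (U0_ok hp) chk_SS.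
by apply: rules_ok_ext => a; rewrite /join /sSS; case: ifP.
Qed.

Lemma Ucomm_step (P : nat -> npoly) p p' Q : valid p -> valid p' -> p != p' -> Ucomm p' Q ->
  (forall g, all (fun a => a < 8)%N (patoms (P g))) ->
  Ucomm p' (fun a => peval q (join (Uval p) Q) (P a)).
Proof.
move=> hp hp' hne HC At a u; apply: peval_comm => b Hb.
rewrite /join; case: ifP => _; first exact: Uval_comm.
exact: HC.
Qed.
Lemma Ucomm_SR p p' : valid p -> valid p' -> p != p' -> Ucomm p' (SR p).
Proof.
move=> hp hp' hne a u; apply: peval_comm => b Hb; exact: Uval_comm.
Qed.

Lemma TR_L p Q : TR p Q 3 = Q 3%N.
Proof.
by rewrite /TR /= peval_cons peval_nil addr0 /teval leval1 scale1r /= mulr1.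
Qed.
Lemma CR_L QA QB : CRok QA QB -> QA 3%N * QB 3%N = QB 3%N * QA 3%N.
Proof.
move=> H; have := lookup_ok H (_ : lookup CR0 3 7 = Some [:: (l1, [:: 7%N; 3%N])]).
rewrite peval_cons peval_nil addr0 /teval leval1 scale1r /= mulr1; apply; by vm_compute.
Qed.
End Sem.

Section Main.
Variable (K : fieldType) (q : K) (R : algType K) (e f kk ki : nat -> R) (n : nat).
Hypothesis hq0 : q != 0.
Hypothesis hd : q - q^-1 != 0.

Lemma hqq' : q * q - 1 != 0.
Proof.
apply: contra hd => /eqP H; apply/eqP.
have -> : q - q^-1 = (q * q - 1) / q by field.
by rewrite H mul0r.
Qed.
Ltac fld := try unfold dd; field; rewrite ?hq0 ?hd ?hqq' ?oner_eq0 ?andbT //.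
Lemma E1 (a b : K) (x : R) : a = b -> a *: x = b *: x. Proof. by move=> ->. Qed.
Ltac cmp := first [ apply: E1; fld
                  | rewrite -[LHS]scale1r; apply: E1; fld
                  | rewrite -[RHS]scale1r; apply: E1; fld
                  | congr (_ + _); cmp ].
Ltac nrm := rewrite ?mulr_algl -?scalerAl -?scalerAr ?scalerA ?mulrA ?scalerDr ?scalerA ?addrA.

Notation DDR := (DR q e f kk ki).
Notation TTR := (TR q e f kk ki).
Notation SSR := (SR q e f kk ki).
Notation ddd := (dd q).

Definition unscale (Q : nat -> R) (g : igen) : R :=
  match g with iX => (ddd ^+ 2)^-1 *: Q 0%N | iF => Q 1%N | iKi => Q 2%N | iL => Q 3%N end.

Fixpoint tevQ (r : nat) (Q : igen -> R) (t : term K) : R :=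
  match t with
  | tC c => c%:A
  | tAdd a b => tevQ r Q a + tevQ r Q b
  | tMul a b => tevQ r Q a * tevQ r Q b
  | tU p g => ugen_val e f kk ki p g
  | tI p g => if p == r then Q g else Defs.teval q e f kk ki (tI p g)
  end.

Lemma bridge_S p g : Defs.teval q e f kk ki (tI p g) = unscale (SSR p) g.
Proof.
case: g; rewrite /unscale /SR /= !peval_cons ?peval_nil /teval /= ?addr0 ?mulr1;
  rewrite /leval /= ?rmorph0 ?rmorph1 ?rmorphN1 ?/casimir; nrm; cmp.
Qed.

Lemma bridge_D p Q g : tevQ p.+1 (unscale Q) (delta_img q p g) = unscale (DDR p Q) g.
Proof.
case: g; rewrite /unscale /DR /= ?eqxx !peval_cons ?peval_nil /teval /= ?addr0 ?mulr1;
  rewrite /leval /= ?rmorph0 ?rmorph1 ?rmorphN1 /tSc /=; nrm; cmp.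
Qed.
Lemma bridge_T p Q g : tevQ p.+1 (unscale Q) (tau_img q p g) = unscale (TTR p Q) g.
Proof.
case: g; rewrite /unscale /TR /= ?eqxx !peval_cons ?peval_nil /teval /= ?addr0 ?mulr1;
  rewrite /leval /= ?rmorph0 ?rmorph1 ?rmorphN1 /tSc /=; nrm; cmp.
Qed.

Fixpoint onlyI (p : nat) (t : term K) : bool :=
  match t with
  | tAdd a b => onlyI p a && onlyI p b
  | tMul a b => onlyI p a && onlyI p b
  | tI p' _ => p' == p
  | _ => true
  end.

Lemma tevQ_ext r (Q1 Q2 : igen -> R) t : (forall g, Q1 g = Q2 g) -> tevQ r Q1 t = tevQ r Q2 t.
Proof. by move=> H; elim: t => //= [a Ha b Hb|a Ha b Hb|p g]; rewrite ?Ha ?Hb ?H. Qed.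

Lemma tevQ_std r t : Defs.teval q e f kk ki t = tevQ r (fun g => Defs.teval q e f kk ki (tI r g)) t.
Proof.
elim: t => //= [a Ha b Hb|a Ha b Hb|p g]; rewrite ?Ha ?Hb //.
by case: eqP => [->|].
Qed.

Lemma tevQ_subst p r Q phi t : onlyI p t ->
  tevQ r Q (tsubst p phi t) = tevQ p (fun g => tevQ r Q (phi g)) t.
Proof.
elim: t => //= [a Ha b Hb|a Ha b Hb|p' g]; try by move=> /andP [/Ha -> /Hb ->].
by move=> /eqP ->; rewrite eqxx.
Qed.

Lemma onlyI_subst p r phi t : onlyI p t -> (forall g, onlyI r (phi g)) ->
  onlyI r (tsubst p phi t).
Proof.
move=> + Hphi; elim: t => //= [a Ha b Hb|a Ha b Hb|p' g];
  try by move=> /andP [/Ha -> /Hb ->].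
by move=> /eqP ->; rewrite eqxx.
Qed.

Lemma onlyI_delta p g : onlyI p.+1 (delta_img q p g).
Proof. by case: g; rewrite /= ?eqxx. Qed.
Lemma onlyI_tau p g : onlyI p.+1 (tau_img q p g).
Proof. by case: g; rewrite /= ?eqxx. Qed.

Fixpoint Titer (p cnt : nat) (Q : nat -> R) : nat -> R :=
  match cnt with 0 => Q | cnt'.+1 => TTR p (Titer p.+1 cnt' Q) end.

Lemma onlyI_tau_steps p cnt t : onlyI p t -> onlyI (p + cnt) (tau_steps q p cnt t).
Proof.
elim: cnt p t => [|cnt IH] p t Ht /=; first by rewrite addn0.
rewrite -addSnnS; apply: IH; apply: onlyI_subst Ht _; exact: onlyI_tau.
Qed.

Lemma tau_steps_eval p cnt t (Q : nat -> R) : onlyI p t ->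
  tevQ (p + cnt) (unscale Q) (tau_steps q p cnt t) = tevQ p (unscale (Titer p cnt Q)) t.
Proof.
elim: cnt p t => [|cnt IH] p t Ht /=; first by rewrite addn0.
rewrite -addSnnS IH; last by apply: onlyI_subst Ht _; exact: onlyI_tau.
rewrite tevQ_subst //; apply: tevQ_ext => g; exact: bridge_T.
Qed.

Lemma extend_eval p a t (Q : nat -> R) : (p < a)%N -> onlyI p t ->
  tevQ a (unscale Q) (extend q p a t) =
  tevQ p (unscale (DDR p (Titer p.+1 (a - p.+1) Q))) t.
Proof.
move=> hpa Ht; rewrite /extend.
have {1}-> : a = (p.+1 + (a - p.+1))%N by rewrite subnKC.
rewrite tau_steps_eval; last by apply: onlyI_subst Ht _; exact: onlyI_delta.
rewrite tevQ_subst //; apply: tevQ_ext => g; exact: bridge_D.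
Qed.

Lemma onlyI_extend p a t : (p < a)%N -> onlyI p t -> onlyI a (extend q p a t).
Proof.
move=> hpa Ht; rewrite /extend.
have {1}-> : a = (p.+1 + (a - p.+1))%N by rewrite subnKC.
apply: onlyI_tau_steps; apply: onlyI_subst Ht _; exact: onlyI_delta.
Qed.

Definition Wstep (S : seq nat) p (Q : nat -> R) := if p \in S then DDR p Q else TTR p Q.
Fixpoint Qdown (S : seq nat) (m c : nat) : nat -> R :=
  match c with 0 => SSR m | c'.+1 => Wstep S (m - c'.+1)%N (Qdown S m c') end.

Lemma Titer_Qdown S m b k : (k <= b)%N -> (b <= m)%N ->
  (forall j, (0 < j <= k)%N -> (b - j)%N \notin S) ->
  Qdown S m (m - b + k) = Titer (b - k) k (Qdown S m (m - b)).
Proof.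
move=> hkb hbm; elim: k hkb => [|k IH] hk HS; first by rewrite addn0 subn0.
rewrite addnS /= (IH (ltnW hk)); last by move=> j /andP [j0 jk]; apply: HS; rewrite j0 ltnW.
have -> : (m - (m - b + k).+1 = b - k.+1)%N by lia.
rewrite /Wstep (negbTE (HS k.+1 _)) ?leqnn //.
by have -> : ((b - k.+1).+1 = b - k)%N by lia.
Qed.

Lemma path_last_ge a s : path ltn a s -> (a <= last a s)%N.
Proof.
elim: s a => [|b s IH] a //= /andP [hab Hp].
exact: leq_trans (ltnW hab) (IH b Hp).
Qed.

Lemma lam_aux_eval S m a s' t : path ltn a s' -> last a s' = m ->
  (forall x, (a <= x < m)%N -> (x \in S) = (x \in a :: s')) -> onlyI a t ->
  Defs.teval q e f kk ki (lam_aux q a s' t) = tevQ a (unscale (Qdown S m (m - a))) t.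
Proof.
elim: s' a t => [|b s'' IH] a t /= Hp Hm HS Ht.
  rewrite -Hm subnn /= (tevQ_std a); apply: tevQ_ext => g; exact: bridge_S.
case/andP: Hp => hab Hp.
have hbm : (b <= m)%N by rewrite -Hm; exact: path_last_ge.
have Hmin := order_path_min ltn_trans Hp.
rewrite (IH b) //; first last.
- exact: onlyI_extend.
- move=> x /andP [hbx hxm]; rewrite HS; last by rewrite (leq_trans (ltnW hab)).
  by rewrite in_cons; have -> : (x == a) = false by apply/eqP; lia.
rewrite extend_eval //.
have Hma : (m - a = (m - b + (b - a.+1)).+1)%N by lia.
have HS2 : forall j, (0 < j <= b - a.+1)%N -> (b - j)%N \notin S.
  move=> j /andP [j0 jk]; rewrite HS; last by lia.
  rewrite !in_cons negb_or; apply/andP; split; first by apply/eqP; lia.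
  rewrite negb_or; apply/andP; split; first by apply/eqP; lia.
  apply/negP => Hin; move/allP: Hmin => /(_ _ Hin); lia.
have hk1 : (b - a.+1 <= b)%N by lia.
rewrite Hma /= (Titer_Qdown hk1 hbm HS2).
have -> : (m - (m - b + (b - a.+1)).+1 = a)%N by lia.
have -> : (b - (b - a.+1) = a.+1)%N by lia.
rewrite /Wstep HS ?in_cons ?eqxx //; lia.
Qed.

Hypothesis hrel : uq_tensor_rels q e f kk ki n.
Notation UC := (Ucomm q e f kk ki).

Lemma Qdown_step S m r : (0 < r < m)%N ->
  Qdown S m (m - r) = Wstep S r (Qdown S m (m - r.+1)).
Proof.
move=> /andP [r0 rm].
have -> : (m - r = (m - r.+1).+1)%N by lia.
rewrite /=; by have -> : (m - (m - r.+1).+1 = r)%N by lia.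
Qed.

Lemma single_inv S m : (0 < m <= n)%N -> forall c, (c < m)%N ->
  IRok q (Qdown S m c) /\ (forall p', (0 < p' < m - c)%N -> UC p' (Qdown S m c)).
Proof.
move=> hm; elim=> [|c IH] hc /=.
  split; first exact: (SR_IR hq0 hd hrel hm).
  move=> p' hp'; apply: (Ucomm_SR hrel hm); rewrite /valid; [lia|apply/eqP; lia].
have [HI HC] := IH (ltnW hc).
have hv : valid n (m - c.+1) by rewrite /valid; lia.
have HCr : UC (m - c.+1) (Qdown S m c) by apply: HC; lia.
split.
  rewrite /Wstep; case: ifP => _; [exact: (DR_IR hq0 hd hrel hv) | exact: (TR_IR hq0 hd hrel hv)].
move=> p' hp'; have hv' : valid n p' by rewrite /valid; lia.
have hne : (m - c.+1 != p')%N by apply/eqP; lia.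
have HCp : UC p' (Qdown S m c) by apply: HC; lia.
rewrite /Wstep; case: ifP => _.
  exact: (Ucomm_step hrel hv hv' hne HCp (Dpoly0_atoms)).
exact: (Ucomm_step hrel hv hv' hne HCp (Tpoly0_atoms)).
Qed.

Lemma L_below S m a r : (0 < r <= a)%N -> (a <= m)%N -> (forall x, (x < a)%N -> x \notin S) ->
  Qdown S m (m - r) 3%N = Qdown S m (m - a) 3%N.
Proof.
move=> /andP [r0 ra] ham HS.
elim: a ra ham HS => [|a IH] ra ham HS; first by lia.
case: (ltnP r a.+1) => hr; last by have -> : r = a.+1 by lia.
rewrite IH; [|lia|lia|move=> x hx; apply: HS; lia].
rewrite Qdown_step; last by lia.
by rewrite /Wstep (negbTE (HS a (ltnSn a))) TR_L.
Qed.


Lemma pair_inv SA SB mA mB : (0 < mB)%N -> (mB <= mA)%N -> (mA <= n)%N -> mB \in SA ->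
  {subset SB <= SA} -> forall c, (c < mB)%N ->
  CRok q (Qdown SA mA (mA - (mB - c))) (Qdown SB mB (mB - (mB - c))).
Proof.
move=> hB hBA hAn hmB Hsub; elim=> [|c IH] hc.
  rewrite !subn0 subnn /=.
  have hvB : valid n mB by rewrite /valid; lia.
  case: (ltnP mB mA) => hlt; last first.
    have -> : mA = mB by lia.
    rewrite subnn; exact: (SS_CR hq0 hd hrel hvB).
  rewrite Qdown_step; last by lia.
  have h1 : (0 < mA <= n)%N by lia.
  have h2 : (mA - mB.+1 < mA)%N by lia.
  have [HI HC] := single_inv SA h1 h2.
  rewrite /Wstep hmB; apply: (DS_CR hq0 hd hrel hvB HI); apply: HC; lia.
set r := (mB - c.+1)%N.
have hr0 : (0 < r)%N by rewrite /r; lia.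
have hrv : valid n r by rewrite /valid /r; lia.
rewrite -/r.
rewrite (Qdown_step SA) ?hr0; last by rewrite /r; lia.
rewrite (Qdown_step SB) ?hr0; last by rewrite /r; lia.
have Hr1 : r.+1 = (mB - c)%N by rewrite /r; lia.
have := IH (ltnW hc); rewrite -Hr1 => HAB.
have h1 : (0 < mA <= n)%N by lia.
have h2 : (mA - r.+1 < mA)%N by rewrite /r; lia.
have h3 : (0 < mB <= n)%N by lia.
have h4 : (mB - r.+1 < mB)%N by rewrite /r; lia.
have [HIA HCA] := single_inv SA h1 h2.
have [HIB HCB] := single_inv SB h3 h4.
have CA : UC r (Qdown SA mA (mA - r.+1)) by apply: HCA; rewrite /r; lia.
have CB : UC r (Qdown SB mB (mB - r.+1)) by apply: HCB; rewrite /r; lia.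
rewrite /Wstep; case: ifP => HrA; case: ifP => HrB.
- exact: (DD_CR hq0 hd hrel hrv HIA HIB HAB CA CB).
- exact: (DT_CR hq0 hd hrel hrv HIA HIB HAB CA CB).
- by rewrite (Hsub r HrB) in HrA.
- exact: (TT_CR hq0 hd hrel hrv HIA HIB HAB CA CB).
Qed.

Lemma path_mem_le a s x : path ltn a s -> x \in a :: s -> (x <= last a s)%N.
Proof.
elim: s a => [|b s IH] a /=; first by rewrite inE => _ /eqP ->.
move=> /andP [hab Hp]; rewrite in_cons => /orP [/eqP ->|Hx].
  exact: leq_trans (ltnW hab) (path_last_ge Hp).
exact: IH.
Qed.

Lemma commute_lists aA sA' aB sB' : path ltn aA sA' -> path ltn aB sB' ->
  {subset aB :: sB' <= aA :: sA'} -> (forall x, x \in aA :: sA' -> (0 < x <= n)%N) ->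
  Qdown (aA :: sA') (last aA sA') (last aA sA' - aA) 3%N *
  Qdown (aB :: sB') (last aB sB') (last aB sB' - aB) 3%N =
  Qdown (aB :: sB') (last aB sB') (last aB sB' - aB) 3%N *
  Qdown (aA :: sA') (last aA sA') (last aA sA' - aA) 3%N.
Proof.
move=> HpA HpB Hsub Hbd.
set mA := last aA sA'; set mB := last aB sB'.
have hmBB : mB \in aB :: sB' by rewrite /mB mem_last.
have hmBA := Hsub _ hmBB.
have hBA : (mB <= mA)%N by apply: path_mem_le.
have hAn : (mA <= n)%N by have := Hbd mA (mem_last _ _); lia.
have hB0 : (0 < mB)%N by have := Hbd mB hmBA; lia.
have haA : (0 < aA)%N by have := Hbd aA (mem_head _ _); lia.
have haB : (0 < aB)%N by have := Hbd aB (Hsub _ (mem_head _ _)); lia.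
have haAm : (aA <= mA)%N by apply: path_last_ge.
have haBm : (aB <= mB)%N by apply: path_last_ge.
have h1 : (mB.-1 < mB)%N by lia.
have HC := pair_inv hB0 hBA hAn hmBA Hsub h1.
have e1 : (mB - mB.-1 = 1)%N by lia.
rewrite e1 in HC; have := CR_L HC.
have HA : forall x, (x < aA)%N -> x \notin aA :: sA'.
  move=> x hx; rewrite in_cons negb_or; apply/andP; split; first by apply/eqP; lia.
  apply/negP => Hin; have := order_path_min ltn_trans HpA => /allP /(_ _ Hin); lia.
have HB : forall x, (x < aB)%N -> x \notin aB :: sB'.
  move=> x hx; rewrite in_cons negb_or; apply/andP; split; first by apply/eqP; lia.
  apply/negP => Hin; have := order_path_min ltn_trans HpB => /allP /(_ _ Hin); lia.
rewrite (L_below (_ : (0 < 1 <= aA)%N) haAm HA); last by lia.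
rewrite (L_below (_ : (0 < 1 <= aB)%N) haBm HB); last by lia.
by [].
Qed.
End Main.

Section Fin.
Variable (K : fieldType) (q : K) (R : algType K) (e f kk ki : nat -> R) (n : nat).
Hypothesis hq0 : q != 0.
Hypothesis hd : q - q^-1 != 0.
Hypothesis hrel : uq_tensor_rels q e f kk ki n.

Definition posl (A : {set 'I_n}) := sort leq [seq (val x).+1 | x <- enum A].

Lemma posl_sorted A : sorted ltn (posl A).
Proof.
rewrite ltn_sorted_uniq_leq sort_uniq sort_sorted ?andbT; last exact: leq_total.
rewrite map_inj_uniq ?enum_uniq // => x y /eqP; rewrite eqSS => /eqP; exact: val_inj.
Qed.

Lemma posl_mem A x : (x \in posl A) = [exists i in A, x == (val i).+1].
Proof.
rewrite /posl mem_sort; apply/mapP/existsP => [[i Hi ->]|[i /andP [Hi /eqP ->]]].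
  by exists i; rewrite -mem_enum Hi eqxx.
by exists i; rewrite ?mem_enum.
Qed.

Lemma LambdaA_eval (A : {set 'I_n}) a s' : posl A = a :: s' ->
  LambdaA q e f kk ki A = Qdown q e f kk ki (a :: s') (last a s') (last a s' - a) 3%N.
Proof.
move=> Hs; rewrite /LambdaA -/(posl A) Hs /lam_term.
have Hp : path ltn a s' by have := posl_sorted A; rewrite Hs.
rewrite (lam_aux_eval e f kk ki hq0 hd (S:=a :: s') Hp (erefl _)) //=; last by rewrite eqxx.
Qed.

Lemma main_comm (A B : {set 'I_n}) : B \subset A ->
  LambdaA q e f kk ki A * LambdaA q e f kk ki B = LambdaA q e f kk ki B * LambdaA q e f kk ki A.
Proof.
move=> HBA.
case EB: (posl B) => [|aB sB'].
  by rewrite /LambdaA -/(posl B) EB /= /GRing.comm mulr_algl mulr_algr.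
case EA: (posl A) => [|aA sA'].
  by rewrite /LambdaA -/(posl A) EA /= mulr_algl mulr_algr.
rewrite (LambdaA_eval EA) (LambdaA_eval EB).
apply: (commute_lists hq0 hd hrel).
- by have := posl_sorted A; rewrite EA.
- by have := posl_sorted B; rewrite EB.
- move=> x; rewrite -EA -EB !posl_mem => /existsP [i /andP [Hi Hx]].
  by apply/existsP; exists i; rewrite (subsetP HBA _ Hi).
- move=> x; rewrite -EA posl_mem => /existsP [i /andP [_ /eqP ->]].
  by rewrite ltn0Sn /= ltn_ord.
Qed.
End Fin.

Unset Implicit Arguments. Set Strict Implicit.

Theorem proposition5p9 (K : fieldType) (q : K)
  (hq0 : q != 0) (hq : forall m : nat, (0 < m)%N -> q ^+ m != 1)
  (k n : nat) (i j : nat -> nat)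
  (hk : (3 <= k)%N) (hj1 : (1 <= j 1)%N)
  (hij : forall m : nat, (2 <= m <= k)%N -> (i m <= j m)%N)
  (hsep : forall m : nat, (1 <= m < k)%N -> (j m < i m.+1 - 1)%N)
  (hn : (j k <= n)%N)
  (B : {set 'I_n})
  (hB1 : \bigcup_(2 <= m < k) ivl n (i m) (j m) \subset B)
  (hB2 : B \subset setA n k i j)
  (R : algType K) (e f kk ki : nat -> R)
  (hrel : uq_tensor_rels q e f kk ki n) :
  LambdaA q e f kk ki (setA n k i j) * LambdaA q e f kk ki B =
  LambdaA q e f kk ki B * LambdaA q e f kk ki (setA n k i j).
Proof.
have hd : q - q^-1 != 0.
  apply: contra (hq 2%N isT) => /eqP H; apply/eqP.
  have -> : q ^+ 2 = q * q by rewrite expr2.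
  have Hq : q = q^-1 by apply/eqP; rewrite -subr_eq0 H.
  by rewrite {2}Hq mulfV.
exact: (main_comm hq0 hd hrel hB2).
Qed.
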